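(* Let $V$ be a Gödel set. In each of the following cases, a sentence $A$ is 1-satisfiable in $G_V$ if and only if $A$ is classically satisfiable: (1) $A$ is propositional (all predicate symbols $0$-ary, no quantifiers), $V$ arbitrary; (2) $A$ is an arbitrary first-order sentence and $0$ is an isolated point of $V$; (3) $A$ is in prenex form, $V$ arbitrary; (4) $A$ is existential, i.e. of the form $\exists\bar x\,B(\bar x)$ with $B$ quantifier-free, $V$ arbitrary.
   Context: A Gödel set is a closed set $V\subseteq[0,1]$ with $0,1\in V$. Formulas are built from atoms, $\bot$, $\wedge,\vee,\supset,\forall,\exists$. A $V$-interpretation $\mathcal I$ consists of a nonempty domain $U$, interpretations of constants and function symbols as usual, and for each $k$-ary predicate symbol a function $U^k\to V$; with constants for elements of $U$ added, $\mathcal I(\bot)=0$, $\wedge,\vee$ are $\min,\max$, $\mathcal I(A\supset B)=1$ if $\mathcal I(A)\le\mathcal I(B)$ and $=\mathcal I(B)$ otherwise, $\forall,\exists$ are $\inf,\sup$ over $U$. A sentence is 1-satisfiable in $G_V$ if some $V$-interpretation gives it value $1$. Classical satisfiability is satisfiability in ordinary two-valued first-order semantics (i.e. with $V=\{0,1\}$). A prenex sentence has the form $Q_1x_1\dots Q_nx_n B$ with $Q_i\in\{\forall,\exists\}$ and $B$ quantifier-free. *)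

(* Defs.v *)
From HB Require Import structures.
From mathcomp Require Import all_boot all_order all_algebra.
From mathcomp Require Import all_classical all_reals topology normedtype.
Unset Printing Implicit Defensive.
Import Order.TTheory GRing.Theory Num.Theory numFieldTopology.Exports numFieldNormedType.Exports.
Local Open Scope classical_set_scope.
Local Open Scope ring_scope.

Record signature := Signature {
  fsym : Type; psym : Type; farity : fsym -> nat; parity : psym -> nat }.

Section Syntax.
Variable S : signature.

(* Terms, variables as de Bruijn indices. *)
Inductive fterm : Type :=
| Var : nat -> fterm
| App : forall f : fsym S, ('I_(farity S f) -> fterm) -> fterm.

Inductive fformula : Type :=
| Atom : forall p : psym S, ('I_(parity S p) -> fterm) -> fformula
| Bot : fformula
| And : fformula -> fformula -> fformula
| Or : fformula -> fformula -> fformula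
| Imp : fformula -> fformula -> fformula
| All : fformula -> fformula
| Ex : fformula -> fformula.

Fixpoint tclosed (k : nat) (t : fterm) : Prop :=
  match t with
  | Var n => (n < k)%N
  | App f args => forall i, tclosed k (args i)
  end.

Fixpoint fclosed (k : nat) (A : fformula) : Prop :=
  match A with
  | Atom p args => forall i, tclosed k (args i)
  | Bot => True
  | And B C | Or B C | Imp B C => fclosed k B /\ fclosed k C
  | All B | Ex B => fclosed k.+1 B
  end.

Definition sentence (A : fformula) : Prop := fclosed 0 A.

Fixpoint qfree (A : fformula) : Prop :=
  match A with
  | Atom _ _ | Bot => True
  | And B C | Or B C | Imp B C => qfree B /\ qfree C
  | All _ | Ex _ => False
  end.

Fixpoint propositional (A : fformula) : Prop :=
  match A with
  | Atom p _ => parity S p = 0%N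
  | Bot => True
  | And B C | Or B C | Imp B C => propositional B /\ propositional C
  | All _ | Ex _ => False
  end.

Fixpoint prenex (A : fformula) : Prop :=
  match A with
  | All B | Ex B => prenex B
  | _ => qfree A
  end.

Fixpoint existential (A : fformula) : Prop :=
  match A with
  | Ex B => existential B
  | _ => qfree A
  end.
End Syntax.

Arguments Var {S}.
Arguments App {S}.
Arguments Atom {S}.
Arguments Bot {S}.
Arguments And {S}.
Arguments Or {S}.
Arguments Imp {S}.
Arguments All {S}.
Arguments Ex {S}.
Arguments tclosed {S}.
Arguments fclosed {S}.
Arguments sentence {S}.
Arguments qfree {S}.
Arguments propositional {S}.
Arguments prenex {S}.
Arguments existential {S}.

Section Semantics.
Variable R : realType.

Definition godel_set (V : set R) : Prop :=
  closed V /\ V `<=` `[0, 1] /\ V 0 /\ V 1.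

Definition zero_isolated (V : set R) : Prop :=
  exists2 e : R, 0 < e & forall x, V x -> `|x| < e -> x = 0.

Variable S : signature.

Record interp (V : set R) := Interp {
  dom : Type;
  dom_inh : dom;
  ifun : forall f : fsym S, ('I_(farity S f) -> dom) -> dom;
  ipred : forall p : psym S, ('I_(parity S p) -> dom) -> R;
  ipred_V : forall p args, V (ipred p args) }.

Arguments dom {V}.
Arguments dom_inh {V}.
Arguments ifun {V}.
Arguments ipred {V}.
Arguments ipred_V {V}.

Definition scons (U : Type) (u : U) (rho : nat -> U) : nat -> U :=
  fun n => if n is n'.+1 then rho n' else u.

Section Eval.
Variables (V : set R) (I : interp V).

Fixpoint teval (rho : nat -> dom I) (t : fterm S) : dom I :=
  match t with
  | Var n => rho n
  | App f args => ifun I f (fun i => teval rho (args i))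
  end.

Fixpoint feval (rho : nat -> dom I) (A : fformula S) : R :=
  match A with
  | Atom p args => ipred I p (fun i => teval rho (args i))
  | Bot => 0
  | And B C => Num.min (feval rho B) (feval rho C)
  | Or B C => Num.max (feval rho B) (feval rho C)
  | Imp B C => if feval rho B <= feval rho C then 1 else feval rho C
  | All B => inf (range (fun u => feval (scons _ u rho) B))
  | Ex B => sup (range (fun u => feval (scons _ u rho) B))
  end.

(* value of a sentence (independent of the environment) *)
Definition sval (A : fformula S) : R := feval (fun _ => dom_inh I) A.
End Eval.
Arguments sval {V}.

Definition sat1 (V : set R) (A : fformula S) : Prop :=
  exists I : interp V, sval I A = 1.

Definition csat (A : fformula S) : Prop := sat1 [set x : R | x = 0 \/ x = 1] A.
End Semantics.

Arguments godel_set {R}.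
Arguments zero_isolated {R}.
Arguments sat1 {R S}.
Arguments csat R {S}.

(* Main.v *)
Require Import Defs.
From mathcomp Require Import all_boot all_order all_algebra.
From mathcomp Require Import all_classical all_reals topology normedtype.
Require Import Defs.
Local Open Scope classical_set_scope.
Local Open Scope ring_scope.
Import Order.TTheory GRing.Theory Num.Theory.

Section Aux.
Variable R : realType.

Section RangeLemmas.
Variables (U : Type) (u0 : U) (f : U -> R).
Hypothesis f01 : forall u, 0 <= f u <= 1.

Lemma rng_ne : range f !=set0.
Proof. by exists (f u0); exists u0. Qed.

Lemma rng_hs : has_sup (range f).
Proof.
split; first exact: rng_ne.
by exists 1 => _ [u _ <-]; case/andP: (f01 u).
Qed.

Lemma rng_hi : has_inf (range f).
Proof.
split; first exact: rng_ne.
by exists 0 => _ [u _ <-]; case/andP: (f01 u).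
Qed.

Lemma le_rsup u : f u <= sup (range f).
Proof. by apply: (sup_upper_bound rng_hs); exists u. Qed.

Lemma ge_rinf u : inf (range f) <= f u.
Proof. by apply: (ge_inf (proj2 rng_hi)); exists u. Qed.

Lemma rsup_le c : (forall u, f u <= c) -> sup (range f) <= c.
Proof. by move=> H; apply: ge_sup; [exact: rng_ne| move=> _ [u _ <-]]. Qed.

Lemma rinf_ge c : (forall u, c <= f u) -> c <= inf (range f).
Proof. by move=> H; apply: lb_le_inf; [exact: rng_ne| move=> _ [u _ <-]]. Qed.

Lemma rsup01 : 0 <= sup (range f) <= 1.
Proof.
apply/andP; split; last by apply: rsup_le => u; case/andP: (f01 u).
by apply: le_trans (le_rsup u0); case/andP: (f01 u0).
Qed.

Lemma rinf01 : 0 <= inf (range f) <= 1.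
Proof.
apply/andP; split; first by apply: rinf_ge => u; case/andP: (f01 u).
by apply: le_trans (ge_rinf u0) _; case/andP: (f01 u0).
Qed.

Lemma rsup_pos : 0 < sup (range f) -> exists u, 0 < f u.
Proof.
move=> H; have [y [u _ <-] Hy] := sup_gt rng_ne H; by exists u.
Qed.
Lemma rinf_eq1 : (forall u, f u = 1) -> inf (range f) = 1.
Proof.
move=> H; apply/eqP; rewrite eq_le; case/andP: rinf01 => _ ->.
by apply: rinf_ge => u; rewrite H.
Qed.

Lemma rinf_eq0 u : f u = 0 -> inf (range f) = 0.
Proof.
move=> H; apply/eqP; rewrite eq_le; case/andP: rinf01 => -> _.
by rewrite -H ge_rinf.
Qed.

Lemma rsup_eq1 u : f u = 1 -> sup (range f) = 1.
Proof.
move=> H; apply/eqP; rewrite eq_le; case/andP: rsup01 => _ ->.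
by rewrite -H le_rsup.
Qed.

Lemma rsup_eq0 : (forall u, f u = 0) -> sup (range f) = 0.
Proof.
move=> H; apply/eqP; rewrite eq_le; case/andP: rsup01 => -> _.
by rewrite andbT; apply: rsup_le => u; rewrite H.
Qed.
End RangeLemmas.

Definition hR (x : R) : R := if 0 < x then 1 else 0.

Lemma hR0 : hR 0 = 0. Proof. by rewrite /hR ltxx. Qed.
Lemma hR1 : hR 1 = 1. Proof. by rewrite /hR ltr01. Qed.

Lemma hR_mono {a b} : a <= b -> hR a <= hR b.
Proof.
rewrite /hR => ab; case: ifP => ha; case: ifP => hb //.
- by rewrite (lt_le_trans ha ab) in hb.
Qed.

Lemma hR_min a b : hR (Num.min a b) = Num.min (hR a) (hR b).
Proof.
rewrite !minEle; have [ab|ab] := leP a b.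
- by rewrite (hR_mono ab).
- by case: ifP => // h; apply/eqP; rewrite eq_le h (hR_mono (ltW ab)).
Qed.

Lemma hR_max a b : hR (Num.max a b) = Num.max (hR a) (hR b).
Proof.
rewrite !maxEle; have [ab|ab] := leP a b.
- by rewrite (hR_mono ab).
- by case: ifP => // h; apply/eqP; rewrite eq_le h (hR_mono (ltW ab)).
Qed.

Lemma hR_imp a b : 0 <= b ->
  hR (if a <= b then 1 else b) = if hR a <= hR b then 1 else hR b.
Proof.
move=> b0; case: (leP a b) => ab.
- by rewrite (hR_mono ab) hR1.
- rewrite /hR (le_lt_trans b0 ab).
  by case: ifP => hb //; rewrite ?lexx // leNgt ltr01.
Qed.

Lemma hR01 x : hR x = 0 \/ hR x = 1.
Proof. by rewrite /hR; case: ifP; [right|left]. Qed.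

End Aux.
Arguments hR {R}.

Section Sem.
Variables (R : realType) (S : signature).

Definition remap (V1 V2 : set R) (I : interp R S V1) (g : R -> R)
  (Hg : forall p a, V2 (g (ipred R S V1 I p a))) : interp R S V2 :=
  Interp R S V2 (dom R S V1 I) (dom_inh R S V1 I) (ifun R S V1 I)
    (fun p a => g (ipred R S V1 I p a)) Hg.

Lemma teval_remap V1 V2 I g Hg rho (t : fterm S) :
  teval R S V2 (@remap V1 V2 I g Hg) rho t = teval R S V1 I rho t.
Proof.
elim: t => [n|f args IH] //=; congr (ifun R S V1 I f _).

Qed.

Lemma feval01 V (HV : V `<=` `[0, 1]) (I : interp R S V) (A : fformula S) :
  forall rho, 0 <= feval R S V I rho A <= 1.
Proof.
elim: A => [p args||B IHB C IHC|B IHB C IHC|B IHB C IHC|B IHB|B IHB] rho /=.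
- by have := HV _ (ipred_V R S V I p (fun i => teval R S V I rho (args i))); rewrite /= in_itv.
- by rewrite lexx ler01.
- case/andP: (IHB rho) => ? ?; case/andP: (IHC rho) => ? ?.
  by rewrite minEle; case: ifP => _; apply/andP.
- case/andP: (IHB rho) => ? ?; case/andP: (IHC rho) => ? ?.
  by rewrite maxEle; case: ifP => _; apply/andP.
- by case: ifP => _; rewrite ?lexx ?ler01 ?IHC.
- by apply: (@rinf01 R _ (dom_inh R S V I)) => u; exact: IHB.
- by apply: (@rsup01 R _ (dom_inh R S V I)) => u; exact: IHB.
Qed.
End Sem.
Arguments feval01 {R S V}.

Section Sem2.
Variables (R : realType) (S : signature).

Lemma feval_id V1 V2 (I : interp R S V1) Hg (A : fformula S) : forall rho,
  feval R S V2 (@remap R S V1 V2 I (fun x => x) Hg) rho A = feval R S V1 I rho A.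
Proof.
elim: A => [p args||B IHB C IHC|B IHB C IHC|B IHB C IHC|B IHB|B IHB] rho /=.
- congr (ipred R S V1 I p _); apply: funext => i; exact: teval_remap.
- by [].
- by rewrite IHB IHC.
- by rewrite IHB IHC.
- by rewrite IHB IHC.
- by congr (inf (image _ _)); apply: funext => u; rewrite IHB.
- by congr (sup (image _ _)); apply: funext => u; rewrite IHB.
Qed.

Definition C2 : set R := [set x : R | x = 0 \/ x = 1].

Variables (V : set R) (HV : V `<=` `[0, 1]) (I : interp R S V).

Definition Ih : interp R S C2 :=
  @remap R S V C2 I (@hR R) (fun p a => @hR01 R _).

Lemma C2sub : C2 `<=` `[0, 1].
Proof. by move=> x [->|->]; rewrite /= in_itv /= ?lexx ?ler01. Qed.

Lemma qfree_h (A : fformula S) : qfree A -> forall rho,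
  feval R S C2 Ih rho A = hR (feval R S V I rho A).
Proof.
elim: A => [p args||B IHB C IHC|B IHB C IHC|B IHB C IHC|B IHB|B IHB] //= q rho.
- by rewrite hR0.
- by case: q => qB qC; rewrite IHB // IHC // hR_min.
- by case: q => qB qC; rewrite IHB // IHC // hR_max.
- case: q => qB qC; rewrite IHB // IHC // hR_imp //.
  by case/andP: (feval01 HV I C rho).
Qed.

Lemma prenex_h (A : fformula S) : prenex A -> forall rho,
  0 < feval R S V I rho A -> feval R S C2 Ih rho A = 1.
Proof.
elim: A => [p args||B IHB C IHC|B IHB C IHC|B IHB C IHC|B IHB|B IHB] q rho pos;
  try by rewrite (@qfree_h _ q) /hR pos.
- apply: (@rinf_eq1 R _ (dom_inh R S V I)).
    by move=> u; exact: (feval01 C2sub).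
  move=> u; apply: IHB => //.
  apply: lt_le_trans pos _.
  apply: (@ge_rinf R _ (dom_inh R S V I)) => v; exact: (feval01 HV).
- have [u hu] := @rsup_pos R _ (dom_inh R S V I) _ pos.
  apply: (@rsup_eq1 R _ (dom_inh R S V I) _ _ u).
    by move=> v; exact: (feval01 C2sub).
  exact: IHB.
Qed.

Variables (e : R) (e0 : 0 < e) (V1 : V 1)
  (He : forall x, V x -> `|x| < e -> x = 0).

Lemma e1 : e <= 1.
Proof.
case: (lerP e 1) => // h; have := He 1 V1; rewrite normr1 => /(_ h) /eqP.
by rewrite oner_eq0.
Qed.

Lemma zi_inv (A : fformula S) : forall rho,
  feval R S V I rho A = 0 \/ e <= feval R S V I rho A.
Proof.
elim: A => [p args||B IHB C IHC|B IHB C IHC|B IHB C IHC|B IHB|B IHB] rho /=.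
- set x := ipred _ _ _ _ _ _.
  have Vx : V x by exact: ipred_V.
  have := HV _ Vx; rewrite /= in_itv /= => /andP [x0 _].
  case: (lerP e x) => h; [by right | left].
  by apply: He => //; rewrite ger0_norm.
- by left.
- by rewrite minEle; case: ifP.
- by rewrite maxEle; case: ifP.
- by case: ifP => _; [right; exact: e1|].
- have f01 := fun v => feval01 HV I B (scons _ v rho).
  have [[u fu0]|nz] := pselect (exists u, feval R S V I (scons _ u rho) B = 0).
    by left; exact: (@rinf_eq0 R _ (dom_inh R S V I) _ f01 u).
  right; apply: (@rinf_ge R _ (dom_inh R S V I)) => u.
  case: (IHB (scons _ u rho)) => // h; exfalso; apply: nz; by exists u.
- have f01 := fun v => feval01 HV I B (scons _ v rho).
  have [[u fu0]|nz] := pselect (exists u, e <= feval R S V I (scons _ u rho) B).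
    by right; apply: le_trans fu0 _; exact: (@le_rsup R _ (dom_inh R S V I) _ f01).
  left; apply: (@rsup_eq0 R _ (dom_inh R S V I) _ f01) => u.
  case: (IHB (scons _ u rho)) => // h; exfalso; apply: nz; by exists u.
Qed.

Lemma full_h (A : fformula S) : forall rho,
  feval R S C2 Ih rho A = hR (feval R S V I rho A).
Proof.
elim: A => [p args||B IHB C IHC|B IHB C IHC|B IHB C IHC|B IHB|B IHB] rho /=.
- by [].
- by rewrite hR0.
- by rewrite IHB IHC hR_min.
- by rewrite IHB IHC hR_max.
- rewrite IHB IHC hR_imp //.
  by case/andP: (feval01 HV I C rho).
- have f01 := fun v => feval01 HV I B (scons _ v rho).
  have g01 := fun v => feval01 C2sub Ih B (scons _ v rho).
  have [pos|npos] := ltP 0 (inf (range (fun u => feval R S V I (scons _ u rho) B))).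
    rewrite {1}/hR pos; apply: (@rinf_eq1 R _ (dom_inh R S V I) _ g01) => u.
    rewrite IHB /hR; case: ifP => // /negbT; rewrite -leNgt => h.
    by move: (lt_le_trans pos (@ge_rinf R _ (dom_inh R S V I) _ f01 u)); rewrite ltNge h.
  have -> : inf (range (fun u => feval R S V I (scons _ u rho) B)) = 0.
    by apply/eqP; rewrite eq_le npos; case/andP: (@rinf01 R _ (dom_inh R S V I) _ f01).
  rewrite hR0.
  have [[u fu0]|nz] := pselect (exists u, feval R S V I (scons _ u rho) B = 0).
    by apply: (@rinf_eq0 R _ (dom_inh R S V I) _ g01 u); rewrite IHB fu0 hR0.
  exfalso; move: npos; apply/negP; rewrite -ltNge.
  apply: lt_le_trans e0 _; apply: (@rinf_ge R _ (dom_inh R S V I)) => u.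
  case: (zi_inv B (scons _ u rho)) => // h; exfalso; apply: nz; by exists u.
- have f01 := fun v => feval01 HV I B (scons _ v rho).
  have g01 := fun v => feval01 C2sub Ih B (scons _ v rho).
  have [pos|npos] := ltP 0 (sup (range (fun u => feval R S V I (scons _ u rho) B))).
    rewrite {1}/hR pos.
    have [u hu] := @rsup_pos R _ (dom_inh R S V I) _ pos.
    by apply: (@rsup_eq1 R _ (dom_inh R S V I) _ g01 u); rewrite IHB /hR hu.
  have -> : sup (range (fun u => feval R S V I (scons _ u rho) B)) = 0.
    by apply/eqP; rewrite eq_le npos; case/andP: (@rsup01 R _ (dom_inh R S V I) _ f01).
  rewrite hR0; apply: (@rsup_eq0 R _ (dom_inh R S V I) _ g01) => u.
  rewrite IHB /hR; case: ifP => // h.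
  by move: (lt_le_trans h (@le_rsup R _ (dom_inh R S V I) _ f01 u)); rewrite ltNge npos.
Qed.
End Sem2.
Arguments Ih {R S V}.
Arguments qfree_h {R S V} HV I {A}.
Arguments prenex_h {R S V} HV I {A}.
Arguments full_h {R S V} HV I {e}.

Lemma prop_qfree (S : signature) (A : fformula S) : propositional A -> qfree A.
Proof. by elim: A => //= B IHB C IHC [/IHB ? /IHC ?]. Qed.

Lemma ex_prenex (S : signature) (A : fformula S) : existential A -> prenex A.
Proof. by elim: A => //= B IHB /IHB. Qed.

Theorem theorem2p1 (R : realType) (S : signature) (V : set R) :
  godel_set V ->
  (forall A : fformula S, propositional A -> (sat1 V A <-> csat R A)) /\
  (zero_isolated V ->
     forall A : fformula S, sentence A -> (sat1 V A <-> csat R A)) /\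
  (forall A : fformula S, sentence A -> prenex A -> (sat1 V A <-> csat R A)) /\
  (forall A : fformula S, sentence A -> existential A ->
     (sat1 V A <-> csat R A)).
Proof.
move=> [_ [HV [V0 V1]]].
have back : forall A : fformula S, csat R A -> sat1 V A.
  move=> A [I HI].
  have Hg : forall p a, V ((fun x => x) (ipred R S _ I p a)).
    by move=> p a; case: (ipred_V R S _ I p a) => ->.
  exists (@remap R S _ V I (fun x => x) Hg).
  by rewrite /Defs.sval feval_id.
have fwd : forall A : fformula S,
  (forall I : interp R S V, feval R S V I (fun _ => dom_inh R S V I) A = 1 ->
     feval R S (C2 R) (Ih I) (fun _ => dom_inh R S V I) A = 1) ->
  sat1 V A -> csat R A.
  move=> A H [I HI]; exists (Ih I); exact: H.
split; [|split; [|split]].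
- move=> A pA; split; last exact: back.
  apply: fwd => I HI; rewrite (qfree_h HV I (prop_qfree _ _ pA)) HI.
  exact: hR1.
- move=> [e e0 He] A _; split; last exact: back.
  apply: fwd => I HI; rewrite (full_h HV I e0 V1 He) HI; exact: hR1.
- move=> A _ pA; split; last exact: back.
  by apply: fwd => I HI; apply: (prenex_h HV I pA); rewrite HI ltr01.
- move=> A _ pA; split; last exact: back.
  by apply: fwd => I HI; apply: (prenex_h HV I (ex_prenex _ _ pA)); rewrite HI ltr01.
Qed.
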